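(* Let $n$ be a positive integer and let $0 < a_1, a_2, \ldots, a_n \le 1$ be real numbers. Define \[ \alpha = \sum_{j=1}^n \frac{a_j}{1 - \log_2 a_j} - 2\ln 2 . \] Then for every real $\mu$ with $0 < \mu \le 1 - \exp(-\alpha/8)$, there exists a Boolean function $f\colon \{0,1\}^n \to \{0,1\}$ such that \[ \mu \le \mathbb{E}[f(x)] \le \frac{3}{4}\mu + \frac{1}{4} \] and \[ \mathrm{Inf}_j[f] < a_j \quad \text{for all } 1 \le j \le n. \]
   Context: Here $x$ denotes a uniformly random element of $\{0,1\}^n$, and $\mathbb{E}[f(x)]$ is the expectation with respect to it. For $1 \le j \le n$, $x^j$ denotes $x$ with its $j$-th coordinate flipped, i.e. $x^j = (x_1,\dots,x_{j-1},1-x_j,x_{j+1},\dots,x_n)$, and the influence of the $j$-th variable on $f$ is $\mathrm{Inf}_j[f] = \Pr[f(x) \ne f(x^j)]$. $\ln$ is the natural logarithm and $\log_2$ the base-$2$ logarithm. *)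

(* Defs.v *)
From mathcomp Require Import all_boot all_order all_algebra.
From mathcomp Require Import all_classical all_reals all_analysis.
Set Implicit Arguments. Unset Strict Implicit. Unset Printing Implicit Defensive.
Import Order.TTheory GRing.Theory Num.Theory.
Local Open Scope ring_scope.

Definition cube (n : nat) := {ffun 'I_n -> bool}.

Definition flip (n : nat) (x : cube n) (j : 'I_n) : cube n :=
  [ffun i => if i == j then ~~ x i else x i].

Definition expect (R : realType) (n : nat) (f : cube n -> bool) : R :=
  (\sum_(x : cube n) (f x)%:R) / (2 ^+ n).

Definition influence (R : realType) (n : nat) (f : cube n -> bool) (j : 'I_n) : R :=
  (#|[set x : cube n | f x != f (flip x j)]|)%:R / (2 ^+ n).

Definition log2 (R : realType) (x : R) : R := ln x / ln 2.

(* Main.v *)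
Require Import Defs.
From mathcomp Require Import all_boot all_order all_algebra.
From mathcomp Require Import all_classical all_reals all_analysis.
From mathcomp Require Import ring lra.
Import Order.TTheory GRing.Theory Num.Theory.
Set Implicit Arguments. Unset Strict Implicit. Unset Printing Implicit Defensive.

Section Cube.
Variable n : nat.
Implicit Types (x : cube n) (f : cube n -> bool) (S T : {set 'I_n}).

Lemma flipK j : involutive (fun x : cube n => flip x j).
Proof. by move=> x; apply/ffunP => i; rewrite !ffunE; case: eqP => //; rewrite negbK. Qed.

Lemma flip_neq x j i : i != j -> flip x j i = x i.
Proof. by rewrite ffunE => /negPf ->. Qed.

Lemma flip_eq x j : flip x j j = ~~ x j.
Proof. by rewrite ffunE eqxx. Qed.

Definition indep f j := forall x, f (flip x j) = f x.

Lemma card_cube : #|[set: cube n]| = 2 ^ n.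
Proof. by rewrite cardsT /cube card_ffun card_bool card_ord. Qed.

Lemma half f j : indep f j ->
  #|[set x : cube n | f x]| = (#|[set x : cube n | f x && x j]|).*2.
Proof.
move=> Hf; rewrite -addnn -(cardsID [set x : cube n | x j] [set x : cube n | f x]).
have -> : [set x : cube n | f x] :&: [set x : cube n | x j] = [set x : cube n | f x && x j].
  by apply/setP => x; rewrite !inE.
congr (_ + _).
have -> : [set x : cube n | f x] :\: [set x : cube n | x j] =
   (fun x => flip x j) @: [set x : cube n | f x && x j].
  apply/setP => x; rewrite !inE; apply/andP/imsetP.
    move=> [/negPf xj fx]; exists (flip x j); last by rewrite flipK.
    by rewrite inE Hf fx flip_eq xj.
  move=> [y]; rewrite inE => /andP[fy yj] ->.
  by rewrite flip_eq yj Hf.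
by rewrite card_imset //; apply: (can_inj (flipK j)).
Qed.

Definition allon S x := [forall i in S, x i].

Lemma allon_flip S x j : j \notin S -> allon S (flip x j) = allon S x.
Proof.
move=> jS; apply: eq_forallb_in => i iS; rewrite flip_neq //.
by apply: contraNneq jS => <-.
Qed.

Lemma allon0 x : allon (finset.set0 : {set 'I_n}) x.
Proof. by apply/forall_inP => i; rewrite inE. Qed.

Lemma allonD1 S j x : j \in S -> allon S x = x j && allon (S :\ j) x.
Proof.
move=> jS; apply/idP/andP.
  move/forall_inP => H; split; first exact: H.
  by apply/forall_inP => i /setD1P[_]; apply: H.
move=> [xj /forall_inP H]; apply/forall_inP => i iS.
by case: (eqVneq i j) => [->//|ij]; apply: H; rewrite !inE ij.
Qed.

Lemma count_allon f S : (forall j, j \in S -> indep f j) ->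
  (#|[set x : cube n | f x && allon S x]| * 2 ^ #|S| = #|[set x : cube n | f x]|)%N.
Proof.
have [k Hk] : exists k, #|S| = k by exists #|S|.
elim: k f S Hk => [|k IH] f S Hk Hf.
  move: Hk => /cards0_eq ->; rewrite cards0 expn0 muln1; apply: eq_card => x.
  by rewrite !inE allon0 andbT.
have : (0 < #|S|)%N by rewrite Hk.
case/card_gt0P => j jS.
have HS' : #|S :\ j| = k by move: Hk; rewrite (cardsD1 j S) jS add1n => -[].
set g := fun x => f x && allon (S :\ j) x.
have gi : indep g j.
  by move=> x; rewrite /g Hf // allon_flip // !inE eqxx.
rewrite Hk expnS mulnA -(IH f (S :\ j)) //; last first.
  by move=> i /setD1P[_]; apply: Hf.
rewrite [(_ * 2)%N]mulnC mul2n -/(g _).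
have -> : #|[set x : cube n | f x && allon (S :\ j) x]| = #|[set x : cube n | g x]| by [].
rewrite (half gi) HS'; congr ((_).*2 * _)%N; apply: eq_card => x.
rewrite !inE /g (allonD1 _ jS); by case: (f x) (x j) (allon (S :\ j) x) => [] [] [].
Qed.

Lemma count_allon1 S : (#|[set x : cube n | allon S x]| * 2 ^ #|S| = 2 ^ n)%N.
Proof.
rewrite -card_cube -(count_allon (f := fun _ => true) (S := S)) //.
Qed.

Lemma indep_or f T j : indep f j -> j \notin T ->
  indep (fun x => f x || allon T x) j.
Proof. by move=> Hf jT x; rewrite Hf allon_flip. Qed.

Definition infl f j := #|[set x : cube n | f x != f (flip x j)]|.

Lemma infl_indep f j : indep f j -> infl f j = 0%N.
Proof.
move=> Hf; apply/eqP; rewrite /infl cards_eq0; apply/eqP/setP => x.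
by rewrite !inE Hf eqxx.
Qed.

Lemma infl_out f T j : j \notin T ->
  (infl (fun x => f x || allon T x) j <= infl f j)%N.
Proof.
move=> jT; rewrite /infl; apply: subset_leq_card; apply/fintype.subsetP => x; rewrite !inE allon_flip //.
by apply: contra => /eqP ->.
Qed.

Lemma infl_in f T j : (forall i, i \in T -> indep f i) -> j \in T ->
  (infl (fun x => f x || allon T x) j * 2 ^ (#|T|.-1) <= 2 ^ n)%N.
Proof.
move=> Hf jT.
have -> : #|T|.-1 = #|T :\ j| by rewrite (cardsD1 j T) jT.
rewrite /infl -(count_allon1 (T :\ j)) leq_mul2r; apply/orP; right.
apply: subset_leq_card; apply/fintype.subsetP => x; rewrite !inE.
apply: contraR => Hx.
have Hx1 : ~~ allon T x by rewrite (allonD1 _ jT) (negPf Hx) andbF.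
have Hx2 : ~~ allon T (flip x j).
  rewrite (allonD1 _ jT); apply/nandP; right.
  apply: contra Hx => /forall_inP H; apply/forall_inP => i iT.
  move: (H i iT); rewrite flip_neq //; by case/setD1P: iT.
by rewrite (negPf Hx1) (negPf Hx2) !orbF Hf.
Qed.

Lemma p0_step f T : (forall j, j \in T -> indep f j) ->
  let A := #|[set x : cube n | ~~ f x && allon T x]| in
  let B := #|[set x : cube n | ~~ (f x || allon T x)]| in
  (A * 2 ^ #|T| = #|[set x : cube n | ~~ f x]|)%N /\ (A + B = #|[set x : cube n | ~~ f x]|)%N.
Proof.
move=> Hf A B; split.
  by apply: (count_allon (f := fun x => ~~ f x)) => j jT x; rewrite Hf.
rewrite -(cardsID [set x : cube n | allon T x] [set x : cube n | ~~ f x]); congr (_ + _)%N.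
  by apply: eq_card => x; rewrite !inE.
by apply: eq_card => x; rewrite !inE negb_or andbC.
Qed.

End Cube.

Unset Implicit Arguments. Set Strict Implicit.
Local Open Scope ring_scope.

Section Taylor.
Variables (R : realType) (N : nat).

Let h (i : 'I_N) : R -> R := ((i.+1%:R : R)^-1) \*: (((cst 1 - id) : R -> R) ^+ i.+1 : R -> R).
Let G : R -> R := (@ln R : R -> R) + \sum_(i < N) h i.

Let Gval y : G y = ln y + \sum_(i < N) (i.+1%:R)^-1 * (1 - y) ^+ i.+1.
Proof.
rewrite /G /=; congr (_ + _).
apply: (big_rec2 (fun (a : R -> R) b => a y = b)) => // i a b _ <-.
by rewrite /h /= exprfctE.
Qed.

Let Gd (y : R) : 0 < y -> is_derive y 1 G (y^-1 - \sum_(i < N) (1 - y) ^+ i).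
Proof.
move=> y0; apply: is_derive_eq.
  apply: is_deriveD; first exact: is_derive1_ln.
rewrite -sumrN; congr (_ + _); apply: eq_bigr => i _.
rewrite /= scalerA mulrA mulVf // mul1r sub0r.
by rewrite scalerN; congr (- _); apply: mulr1.
Qed.

Lemma taylor_ln2 : \sum_(i < N) (i.+1%:R)^-1 * (2^-1 : R) ^+ i.+1 <= ln (2 : R).
Proof.
have dG (x : R) : 0 < x -> derivable G x 1 by move=> x0; have [] := Gd _ x0.
have H : G (2^-1) <= G 1.
  apply: (@ger0_derive1_ndecr _ G (2^-1) 1) => //.
  - move=> x; rewrite in_itv /= => /andP[x0 _]; apply: dG.
    by apply: lt_trans x0.
  - move=> x; rewrite in_itv /= => /andP[x0 x1].
    have xp : 0 < x by apply: lt_trans x0.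
    rewrite derive1E; have [_ ->] := Gd _ xp.
    rewrite subr_ge0.
    have E : x * \sum_(i < N) (1 - x) ^+ i = 1 - (1 - x) ^+ N.
      have := subrX1 (1 - x) N.
      rewrite (_ : 1 - x - 1 = - x); last by rewrite addrAC subrr add0r.
      by rewrite mulNr => E; rewrite -[LHS]opprK -E opprB.
    rewrite -(ler_pM2l xp) mulfV ?gt_eqF // E lerBlDr lerDl.
    by rewrite exprn_ge0 // subr_ge0 ltW.
  - apply: derivable_within_continuous => x; rewrite in_itv /= => /andP[x0 _].
    by apply: dG; apply: lt_le_trans x0.
  - by rewrite invf_le1 // ler1n.
have Z : \sum_(i < N) (i.+1%:R)^-1 * (1 - 1 : R) ^+ i.+1 = 0.
  by apply: big1 => i _; rewrite subrr expr0n mulr0.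
rewrite !Gval ln1 Z addr0 in H.
move: H; rewrite lnV ?posrE // addrC -lerBrDr sub0r opprK.
rewrite (_ : 1 - 2^-1 = 2^-1 :> R) //.
by rewrite {1}(splitr (1 : R)) mul1r addrK.
Qed.

End Taylor.

Section RealLemmas.
Variable R : realType.

Definition bf (x : R) := x / (1 - log2 x).
Definition gam (t : nat) : R := 2 / (2 ^+ t * t%:R).

Lemma ln2_gt0 : 0 < ln (2 : R).
Proof. by apply: ln_gt0; rewrite ltr1n. Qed.

Lemma log2_le (x y : R) : 0 < x -> x <= y -> log2 x <= log2 y.
Proof.
move=> x0 xy; rewrite /log2 ler_pM2r ?invr_gt0 ?ln2_gt0 //.
by rewrite ler_ln // posrE (lt_le_trans x0).
Qed.

Lemma log2_le0 (x : R) : 0 < x -> x <= 1 -> log2 x <= 0.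
Proof.
move=> x0 x1; rewrite /log2 pmulr_lle0 ?invr_gt0 ?ln2_gt0 //.
exact: ln_le0.
Qed.

Lemma bf_mono (x y : R) : 0 < x -> x <= y -> y <= 1 -> bf x <= bf y.
Proof.
move=> x0 xy y1; have y0 : 0 < y by apply: lt_le_trans xy.
have Dy : 1 <= 1 - log2 y by rewrite lerDl oppr_ge0 log2_le0.
have Dx : 1 - log2 y <= 1 - log2 x by rewrite lerD2l lerN2 log2_le.
have Dy0 : 0 < 1 - log2 y by apply: lt_le_trans Dy.
have Dx0 : 0 < 1 - log2 x by apply: lt_le_trans Dx.
rewrite /bf (@le_trans _ _ (y / (1 - log2 x))) //.
  by rewrite ler_wpM2r // invr_ge0 ltW.
by rewrite ler_wpM2l ?(ltW y0) // lef_pV2 ?posrE.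
Qed.

Lemma two_pow_gt0 (t : nat) : 0 < (2 : R) ^+ t.
Proof. by rewrite exprn_gt0. Qed.

Lemma bf_pow (t : nat) : (1 <= t)%N -> bf (2 / 2 ^+ t) = gam t.
Proof.
move=> t1.
have L : log2 (2 / 2 ^+ t : R) = 1 - t%:R.
  rewrite /log2 lnM ?posrE ?invr_gt0 ?two_pow_gt0 // lnV ?posrE ?two_pow_gt0 //.
  rewrite lnXn // -mulr_natr.
  rewrite ?mul1r; have := ln2_gt0; set l := ln 2 => l0.
  by field; rewrite gt_eqF.
rewrite /bf L /gam (_ : 1 - (1 - t%:R) = t%:R :> R); last by rewrite opprB addrC subrK.
by rewrite invfM mulrA.
Qed.

Lemma gam_bound (t : nat) (x : R) : (1 <= t)%N -> 0 < x -> x <= 2 / 2 ^+ t ->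
  bf x <= gam t.
Proof.
move=> t1 x0 xt; rewrite -bf_pow // bf_mono //.
rewrite ler_pdivrMr ?two_pow_gt0 // mul1r.
by rewrite -[X in X <= _]expr1 ler_eXn2l // ltr1n.
Qed.

Lemma gam_ge0 t : 0 <= gam t.
Proof. by rewrite /gam divr_ge0 // mulr_ge0 // ltW ?two_pow_gt0. Qed.

Lemma gam_mono s t : (1 <= s)%N -> (s <= t)%N -> gam t <= gam s.
Proof.
move=> s1 st; rewrite /gam ler_pM2l // lef_pV2 ?posrE; last 2 first.
- by rewrite mulr_gt0 ?two_pow_gt0 // ltr0n (leq_trans s1 st).
- by rewrite mulr_gt0 ?two_pow_gt0 // ltr0n.
apply: ler_pM; [exact/ltW/two_pow_gt0 | exact: ler0n | | by rewrite ler_nat].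
by rewrite ler_eXn2l // ltr1n.
Qed.

Lemma gam_mul t : (1 <= t)%N -> gam t * t%:R = 2 / 2 ^+ t.
Proof.
move=> t1; rewrite /gam invfM -!mulrA mulVf ?mulr1 //.
by rewrite pnatr_eq0 -lt0n.
Qed.

Definition Phi (n c : nat) : R := \sum_(s < n) gam (maxn s.+1 c).

Lemma Phi_step n c t : (1 <= c)%N -> (c <= t)%N -> (t < n)%N ->
  Phi n c = \sum_(s < t) gam (maxn s.+1 c) + Phi n t - 2 / 2 ^+ t.
Proof.
move=> c1 ct tn; have t1 : (1 <= t)%N by apply: leq_trans ct.
rewrite /Phi -(big_mkord (fun _ => true) (fun s => gam (maxn s.+1 c))).
rewrite -(big_mkord (fun _ => true) (fun s => gam (maxn s.+1 t))).
rewrite -(big_mkord (fun _ => true) (fun s => gam (maxn s.+1 c))).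
rewrite (big_cat_nat (leq0n t) (ltnW tn)) /=.
rewrite [\sum_(0 <= s < n) gam (maxn s.+1 t)](big_cat_nat (leq0n t) (ltnW tn)) /=.
have E1 : \sum_(t <= s < n) gam (maxn s.+1 c) = \sum_(t <= s < n) gam (maxn s.+1 t).
  apply: eq_big_nat => s /andP[ts _].
  rewrite (maxn_idPl (leq_trans ct (leqW ts))) (maxn_idPl (leqW ts)) //.
have E2 : \sum_(0 <= s < t) gam (maxn s.+1 t) = 2 / 2 ^+ t.
  rewrite (eq_big_nat _ _ (F2 := fun _ => gam t)); last first.
    by move=> s /andP[_ st]; rewrite (maxn_idPr st).
  by rewrite sumr_const_nat subn0 -[gam t *+ t]mulr_natr gam_mul.
rewrite E1 E2; lra.
Qed.

End RealLemmas.

Section Main.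
Variables (R : realType) (n : nat) (a : 'I_n -> R).
Hypothesis ha : forall j, 0 < a j <= 1.
Variable q : R.
Hypotheses (q0 : 0 < q) (q1 : q < 1).

Definition P0 (f : cube n -> bool) : R := (#|[set x : cube n | ~~ f x]|)%:R / 2 ^+ n.
Definition good (f : cube n -> bool) :=
  3 / 4 * q <= P0 f <= q /\ forall j, influence R f j < a j.

Lemma sum_disjU (A B : {set 'I_n}) (F : 'I_n -> R) : [disjoint A & B] ->
  \sum_(i in A :|: B) F i = \sum_(i in A) F i + \sum_(i in B) F i.
Proof. by move=> d; rewrite -bigU //; apply: eq_bigl => i; rewrite !inE. Qed.

Lemma disj_notin {A B : {set 'I_n}} {x} : [disjoint A & B] -> x \in B -> x \notin A.
Proof.
rewrite -setI_eq0 => /eqP H xB; apply/negP => xA.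
have : x \in A :&: B by rewrite inE xA xB.
by rewrite H inE.
Qed.

Lemma pow2n_gt0 : 0 < (2 : R) ^+ n.
Proof. exact: two_pow_gt0. Qed.

Lemma infl0 (f : cube n -> bool) (j : 'I_n) : indep f j -> influence R f j = 0.
Proof. by move=> H; rewrite /influence -/(infl f j) infl_indep // mul0r. Qed.

Lemma infl_out_R (f : cube n -> bool) (T : {set 'I_n}) j : j \notin T ->
  influence R (fun x => f x || allon T x) j <= influence R f j.
Proof.
move=> jT; rewrite /influence -/(infl f j) -/(infl _ j).
by rewrite ler_pM2r ?invr_gt0 ?pow2n_gt0 // ler_nat infl_out.
Qed.

Lemma infl_in_R (f : cube n -> bool) (T : {set 'I_n}) j : (forall i, i \in T -> indep f i) -> j \in T ->
  influence R (fun x => f x || allon T x) j <= 2 / 2 ^+ #|T|.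
Proof.
move=> Hf jT; have := infl_in Hf jT; rewrite -(ler_nat R) natrM !natrX.
have T1 : (0 < #|T|)%N by apply/card_gt0P; exists j.
rewrite /influence -/(infl _ j) => H.
rewrite ler_pdivrMr ?pow2n_gt0 //.
rewrite -ler_pdivlMr ?two_pow_gt0 // in H.
apply: (le_trans H); rewrite -(prednK T1) exprS.
have h1 := two_pow_gt0 R #|T|.-1; have h2 := pow2n_gt0.
rewrite le_eqVlt; apply/orP; left; apply/eqP; field.
by rewrite gt_eqF.
Qed.

Lemma P0_step (f : cube n -> bool) (T : {set 'I_n}) : (forall j, j \in T -> indep f j) ->
  P0 (fun x => f x || allon T x) = P0 f * (1 - (2 ^+ #|T|)^-1).
Proof.
move=> Hf; have [H1 H2] := p0_step Hf.
move: H1 H2.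
set A := #|[set x : cube n | ~~ f x && allon T x]|.
set B := #|[set x : cube n | ~~ (f x || allon T x)]|.
set N0 := #|[set x : cube n | ~~ f x]| => H1 H2.
rewrite /P0 -/B -/N0.
have E : B%:R = N0%:R - N0%:R / (2 : R) ^+ #|T|.
  have HA : (A%:R : R) = N0%:R / 2 ^+ #|T|.
    by rewrite -H1 natrM natrX mulfK ?gt_eqF ?two_pow_gt0.
  by rewrite -HA -H2 natrD addrAC subrr add0r.
rewrite E; have := two_pow_gt0 R #|T|; have := pow2n_gt0 => h1 h2.
field; rewrite !gt_eqF //.
Qed.

Lemma a_le1 j : a j <= 1. Proof. by case/andP: (ha j). Qed.
Lemma a_gt0 j : 0 < a j. Proof. by case/andP: (ha j). Qed.

Lemma greedy (k : nat) : forall (c : nat) (P U : {set 'I_n}) (f : cube n -> bool) (s : R),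
  #|U| = k ->
  (1 <= c)%N ->
  [disjoint P & U] ->
  (forall j i, j \in U -> i \in P -> a j <= a i) ->
  (forall j, j \in P :|: U -> a j <= 2 / 2 ^+ c) ->
  (forall j, j \in U -> a j <= 2 / 2 ^+ #|P|) ->
  \sum_(j in P) bf R (a j) <= \sum_(s0 < #|P|) gam R (maxn s0.+1 c) ->
  (forall j, j \in P :|: U -> indep f j) ->
  (forall j, j \notin P :|: U -> influence R f j < a j) ->
  q < P0 f -> P0 f <= expR (- s) ->
  (exists g, good g) \/
  (exists s', q < expR (- s') /\
     \sum_(j in P :|: U) bf R (a j) + 8 * s <= 8 * s' + Phi R n c).
Proof.
elim: k => [|k IH] c P U f s Uk c1 dPU Hord Hc HP Hsum Hind Hinf qP0 P0s.
  right; exists s; split; first by apply: lt_le_trans P0s.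
  move: Uk => /cards0_eq ->; rewrite finset.setU0 addrC lerD2l.
  apply: (le_trans Hsum).
  have Pn : (#|P| <= n)%N by have := max_card P; rewrite card_ord.
  rewrite /Phi (big_ord_widen n (fun s0 => gam R (maxn s0.+1 c)) Pn).
  rewrite big_mkcond /=; apply: ler_sum => i _.
  by case: ifP => // _; apply: gam_ge0.
have U0 : (0 < #|U|)%N by rewrite Uk.
case/card_gt0P: U0 => x0 x0U.
have [x xU xmax] : exists2 x, x \in U & forall j, j \in U -> a j <= a x.
  by case: (arg_maxP a x0U) => y yU H; exists y.
have xP : x \notin P by apply: disj_notin dPU xU.
have Uk' : #|U :\ x| = k by move: Uk; rewrite (cardsD1 x U) xU add1n => -[].
set t := #|P|.
have Ht : a x <= 2 / 2 ^+ t := HP x xU.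
have axc : a x <= 2 / 2 ^+ c by apply: Hc; rewrite inE xU orbT.
have PUeq : x |: P :|: U :\ x = P :|: U.
  apply/setP => j; rewrite !inE; case: (eqVneq j x) => [->|] //=.
  by rewrite xU orbT.
case: (ltrP (2 / 2 ^+ t.+1) (a x)) => Hx.
  have t1 : (1 <= t)%N.
    rewrite lt0n; apply/eqP => t0; move: Hx; rewrite t0 expr1 divff //.
    by move=> /lt_le_trans/(_ (a_le1 x)); rewrite ltxx.
  set T := x |: P.
  have cT : #|T| = t.+1 by rewrite /T cardsU1 xP.
  have HindT : forall j, j \in T -> indep f j.
    move=> j /setU1P[->|jP]; apply: Hind; rewrite inE ?xU ?orbT ?jP //.
  set f' := fun y => f y || allon T y.
  have HP0 : P0 f' = P0 f * (1 - (2 ^+ t.+1)^-1) by rewrite -cT; apply: P0_step.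
  have u_le : (2 ^+ t.+1 : R)^-1 <= 1/4.
    rewrite mul1r lef_pV2 ?posrE ?two_pow_gt0 //.
    rewrite (_ : 4 = 2 ^+ 2 :> R); last by rewrite expr2; lra.
    by rewrite ler_eXn2l ?ltr1n.
  have u_ge : 0 <= (2 ^+ t.+1 : R)^-1 by rewrite invr_ge0 ltW ?two_pow_gt0.
  have infT : forall j, j \in T -> influence R f' j < a j.
    move=> j jT; apply: (le_lt_trans (@infl_in_R f T j HindT jT)); rewrite cT.
    have ax_aj : a x <= a j.
      by move: jT; move=> /setU1P[->|jP] //; apply: Hord.
    apply: lt_le_trans ax_aj; move: Hx; rewrite !exprS.
    have := two_pow_gt0 R t => h; rewrite (_ : 2 / (2 * 2 ^+ t) = (2 ^+ t)^-1) //.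
    by field; rewrite gt_eqF.
  have infO : forall j, j \notin T -> influence R f' j <= influence R f j.
    by move=> j jT; apply: infl_out_R.
  have P0ge : 0 <= P0 f by rewrite /P0 divr_ge0 // ltW ?pow2n_gt0.
  case: (lerP (P0 f') q) => Hq.
    left; exists f'; split.
      apply/andP; split => //; rewrite HP0.
      have qP : q <= P0 f by apply: ltW.
      nra.
    move=> j; case: (boolP (j \in T)) => jT; first exact: infT.
    apply: le_lt_trans (infO j jT) _.
    case: (boolP (j \in P :|: U)) => jPU; last exact: Hinf.
    by rewrite infl0 ?a_gt0 //; apply: Hind.
  have ct : (c <= t)%N.
    rewrite leqNgt; apply/negP => tc.
    have : (2 : R) / 2 ^+ c <= 2 / 2 ^+ t.+1.
      rewrite ler_pM2l // lef_pV2 ?posrE ?two_pow_gt0 //.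
      by rewrite ler_eXn2l ?ltr1n.
    by move=> /(le_trans axc) /(lt_le_trans Hx); rewrite ltxx.
  have tn : (t < n)%N by have := max_card T; rewrite card_ord cT.
  have := IH t finset.set0 (U :\ x) f' (s + (2 ^+ t.+1)^-1) Uk' t1.
  case.
  - by rewrite -setI_eq0 finset.set0I.
  - by move=> j i _; rewrite inE.
  - by move=> j; rewrite finset.set0U => /setD1P[_ jU]; apply: HP.
  - move=> j _; rewrite cards0 expr0 divr1; apply: le_trans (a_le1 j) _; lra.
  - by rewrite big_set0 cards0 big_ord0.
  - move=> j; rewrite finset.set0U => /setD1P[jx jU]; apply: indep_or.
      by apply: Hind; rewrite inE jU orbT.
    rewrite !inE negb_or jx /=; apply: disj_notin dPU jU.
  - move=> j; rewrite finset.set0U => jn.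
    case: (boolP (j \in T)) => jT; first exact: infT.
    apply: le_lt_trans (infO j jT) _; apply: Hinf.
    by rewrite -PUeq inE negb_or jT.
  - by [].
  - rewrite HP0 opprD expRD; apply: ler_pM => //; first lra.
    by have := expR_ge1Dx (- (2 ^+ t.+1 : R)^-1).
  - by move=> H; left.
  move=> [s'' [qs H]]; right; exists s''; split => //.
  rewrite finset.set0U in H.
  rewrite sum_disjU // (big_setD1 x xU) /= (@Phi_step R n c t c1 ct tn).
  have bx : bf R (a x) <= gam R t := @gam_bound R t (a x) t1 (a_gt0 x) Ht.
  have gt : gam R t <= 2 / 2 ^+ t.
    rewrite -gam_mul // ler_peMr ?gam_ge0 //.
    by rewrite ler1n.
  have uW : (2 ^+ t.+1 : R)^-1 = (2 / 2 ^+ t) / 4.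
    have := two_pow_gt0 R t => h; rewrite exprS; field; rewrite gt_eqF //.
  rewrite uW in H; lra.
have := IH c (x |: P) (U :\ x) f s Uk' c1.
case.
- rewrite -setI_eq0; apply/eqP/setP => j; rewrite !inE.
  case: (eqVneq j x) => [->|jx] //=.
  by apply/negP => /andP[jP jU]; have := disj_notin dPU jU; rewrite jP.
- move=> j i /setD1P[jx jU]; move=> /setU1P[->|iP]; first exact: xmax.
  exact: Hord.
- by rewrite PUeq.
- move=> j /setD1P[_ jU]; rewrite cardsU1 xP add1n.
  exact: le_trans (xmax j jU) Hx.
- rewrite (big_setU1 _ xP) /= cardsU1 xP add1n big_ord_recr /= addrC lerD //.
  case: (leqP c t.+1) => h.
    by apply: gam_bound => //; apply: a_gt0.
  by apply: gam_bound => //; apply: a_gt0.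
- by rewrite PUeq.
- by rewrite PUeq.
- by [].
- by [].
- by move=> H; left.
by move=> [s'' [qs H]]; right; exists s''; rewrite -PUeq.
Qed.

End Main.

Lemma expectE (R : realType) (n : nat) (g : cube n -> bool) :
  expect R g = 1 - P0 R n g.
Proof.
rewrite /expect /P0.
have H1 : \sum_(x : cube n) ((g x)%:R : R) = (#|[set x : cube n | g x]|)%:R.
  rewrite -sum1_card natr_sum [RHS]big_mkcond /=; apply: eq_bigr => x _.
  by rewrite inE; case: (g x).
have H2 : (#|[set x : cube n | g x]| + #|[set x : cube n | ~~ g x]| = 2 ^ n)%N.
  have C : ~: [set x : cube n | g x] = [set x : cube n | ~~ g x].
    by apply/setP => x; rewrite !inE.
  by rewrite -C cardsC /cube card_ffun card_bool card_ord.
have E : (#|[set x : cube n | g x]|%:R : R) = 2 ^+ n - #|[set x : cube n | ~~ g x]|%:R.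
  by rewrite -natrX -H2 natrD addrK.
rewrite H1 E; have := two_pow_gt0 R n => h; field; by rewrite gt_eqF.
Qed.

Lemma Phi1_le (R : realType) (n : nat) : Phi R n 1 <= 2 * ln (2 : R).
Proof.
have := taylor_ln2 R n; rewrite /Phi -(ler_pM2l (_ : (0 : R) < 2)) //.
apply: le_trans; rewrite mulr_sumr le_eqVlt; apply/orP; left; apply/eqP.
apply: eq_bigr => i _; rewrite (maxn_idPl (ltn0Sn i)) /gam.
have h : (2 : R) ^+ i.+1 != 0 by rewrite gt_eqF // two_pow_gt0.
have h2 : (i.+1%:R : R) != 0 by rewrite pnatr_eq0.
rewrite exprVn; field. by rewrite h /= addrC natr1.
Qed.

Theorem theorem1 (R : realType) (n : nat) (hn : (0 < n)%N) (a : 'I_n -> R)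
  (ha : forall j, 0 < a j <= 1) (mu : R) :
  let alpha := \sum_(j < n) a j / (1 - log2 (a j)) - 2 * ln 2 in
  0 < mu -> mu <= 1 - expR (- (alpha / 8)) ->
  exists f : cube n -> bool,
    [/\ mu <= expect R f, expect R f <= 3 / 4 * mu + 1 / 4
      & forall j : 'I_n, influence R f j < a j].
Proof.
move=> alpha mu0 muH.
set q := 1 - mu.
have eq : expR (- (alpha / 8)) <= q by rewrite /q; lra.
have q0 : 0 < q by apply: lt_le_trans eq; apply: expR_gt0.
have P01 : P0 R n (fun _ => false) = 1.
  rewrite /P0 (_ : [set x : cube n | ~~ false] = [set: cube n]); last first.
    by apply/setP => x; rewrite !inE.
  by rewrite card_cube natrX divff // gt_eqF // two_pow_gt0.
have := @greedy R n a ha q n 1 finset.set0 [set: 'I_n] (fun _ => false) 0.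
case.
- by rewrite cardsT card_ord.
- by [].
- by rewrite -setI_eq0 finset.set0I.
- by move=> j i _; rewrite inE.
- by move=> j _; rewrite expr1 divff //; case/andP: (ha j).
- move=> j _; rewrite cards0 expr0 divr1; case/andP: (ha j) => _ h.
  apply: (le_trans h); rewrite ler1n //.
- by rewrite big_set0 cards0 big_ord0.
- by move=> j _ x.
- by move=> j; rewrite !inE.
- by rewrite P01 /q; lra.
- by rewrite P01 oppr0 expR0.
- move=> [g [/andP[g1 g2] g3]]; exists g; split => //; rewrite expectE.
    by rewrite /q in g2; lra.
  by rewrite /q in g1; lra.
move=> [s' [qs H]]; exfalso.
move: H; rewrite finset.set0U mulr0 addr0 => H.
have H3 := Phi1_le R n.
have Ha : alpha <= 8 * s'.
  rewrite /alpha.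
  have -> : \sum_(j < n) a j / (1 - log2 (a j)) = \sum_(j in [set: 'I_n]) bf R (a j).
    by apply: eq_bigl => j; rewrite inE.
  lra.
have : expR (- s') <= expR (- (alpha / 8)) by rewrite ler_expR; lra.
lra.
Qed.
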